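(* Let $\mathfrak n=W\oplus\mathfrak z$ be a finite-dimensional 2-step nilpotent Lie algebra over a field of characteristic zero which is of TST type and satisfies $(\Lambda^2\mathfrak n)^{\mathfrak n}=\Lambda^2\mathfrak z$. Then every Lie bialgebra cobracket $\delta$ on $\mathfrak n$ satisfies $\delta(\mathfrak z)\subseteq\Lambda^2\mathfrak z$ and $\delta(W)\subseteq (W\wedge\mathfrak z)\oplus\Lambda^2\mathfrak z$.
   Context: $\mathfrak z$ is the center of $\mathfrak n$ and $W$ a fixed linear complement. Fix a basis $z_1,\dots,z_m$ of $\mathfrak z$ and define $T_i:W\to W^*$ by $[v,w]=\sum_iT_i(v)(w)z_i$ ($v,w\in W$). $\mathfrak n$ is of TST type if the only linear map $S:W^*\to W$ with $T_iST_k+T_kST_i=0$ for all $i,k$ is $S=0$. $(\Lambda^2\mathfrak n)^{\mathfrak n}$ denotes the invariants of $\Lambda^2\mathfrak n$ under the adjoint action $\mathrm{ad}_x(a\wedge b)=[x,a]\wedge b+a\wedge[x,b]$. A Lie bialgebra cobracket is a linear $\delta:\mathfrak n\to\Lambda^2\mathfrak n$ satisfying co-Jacobi ($\delta(x_1)\wedge x_2-x_1\wedge\delta(x_2)=0$ where $\delta(x)=x_1\wedge x_2$) and $\delta[x,y]=[\delta x,y]+[x,\delta y]$. *)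

(* Defs.v *)
(* Coordinate model of a 2-step nilpotent Lie algebra
   n = W (+) z, dim W = d, dim z = m, n = 'rV[F]_(d+m):
   indices i < d are W-coordinates, indices d <= i are z-coordinates
   (z-coordinate d+k is the coefficient of the basis vector z_k).
   Lambda^2 n is modelled by skew-symmetric (d+m)x(d+m) matrices,
   with a /\ b := a^T b - b^T a  (i.e. a(x)b - b(x)a). *)
From HB Require Import structures.
From mathcomp Require Import all_boot all_order all_algebra.
Set Implicit Arguments. Unset Strict Implicit. Unset Printing Implicit Defensive.
Import Order.TTheory GRing.Theory Num.Theory.
Local Open Scope ring_scope.

Section Defs.
Variables (F : fieldType) (d m : nat).
Notation N := (d + m)%N.

(* structure maps T_i : W -> W^*,  T_i(v)(w) = v *m T i *m w^T *)
Variable T : 'I_m -> 'M[F]_d.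

Definition br (x y : 'rV[F]_N) : 'rV[F]_N :=
  row_mx 0 (\row_(k < m) (lsubmx x *m T k *m (lsubmx y)^T) 0 0).

Definition ev (i : 'I_N) : 'rV[F]_N := delta_mx 0 i.

Definition wedge (a b : 'rV[F]_N) : 'M[F]_N := a^T *m b - b^T *m a.

Definition skew (A : 'M[F]_N) : Prop := A^T = - A.

(* adjoint action on Lambda^2 n, defined on the basis e_i /\ e_j (i<j) by
   ad_x(a/\b) = [x,a]/\b + a/\[x,b] and extended linearly
   (a skew A equals sum_{i<j} A i j (e_i /\ e_j)). *)
Definition adL2 (x : 'rV[F]_N) (A : 'M[F]_N) : 'M[F]_N :=
  \sum_(i < N) \sum_(j < N | (i < j)%N)
     A i j *: (wedge (br x (ev i)) (ev j) + wedge (ev i) (br x (ev j))).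

(* Lambda^3 n modelled by alternating 3-tensors; (A /\ c) for A in Lambda^2 *)
Definition wedge3 (A : 'M[F]_N) (c : 'rV[F]_N) (p q r : 'I_N) : F :=
  A p q * c 0 r + A q r * c 0 p + A r p * c 0 q.

Definition isZ (i : 'I_N) : bool := (d <= i)%N.

Definition inL2z (A : 'M[F]_N) : Prop :=
  forall i j : 'I_N, ~~ (isZ i && isZ j) -> A i j = 0.

Definition inWZ_L2z (A : 'M[F]_N) : Prop :=
  forall i j : 'I_N, ~~ isZ i -> ~~ isZ j -> A i j = 0.

Definition is_TST_type : Prop :=
  forall S : 'M[F]_d,
    (forall i k : 'I_m, T i *m S *m T k + T k *m S *m T i = 0) -> S = 0.

Definition invariants_eq_L2z : Prop :=
  forall A : 'M[F]_N, skew A -> ((forall x, adL2 x A = 0) <-> inL2z A).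

Definition is_cobracket (delta : 'rV[F]_N -> 'M[F]_N) : Prop :=
  [/\
      (forall (a : F) x y, delta (a *: x + y) = a *: delta x + delta y),
      (forall x, skew (delta x)),
      (* co-Jacobi: delta(x_1)/\x_2 - x_1/\delta(x_2) = 0, where
         delta(x) = x_1/\x_2 = sum_{i<j} delta(x)_{ij} e_i/\e_j, and
         x_1 /\ delta(x_2) = delta(x_2) /\ x_1 *)
      (forall x (p q r : 'I_N),
         \sum_(i < N) \sum_(j < N | (i < j)%N)
           delta x i j * (wedge3 (delta (ev i)) (ev j) p q r
                          - wedge3 (delta (ev j)) (ev i) p q r) = 0) &
      (forall x y, delta (br x y) = adL2 x (delta y) - adL2 y (delta x))].

End Defs.

(* Main.v *)
Require Import Defs.
From HB Require Import structures.
From mathcomp Require Import all_boot all_order all_algebra.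
Set Implicit Arguments. Unset Strict Implicit. Unset Printing Implicit Defensive.
Import Order.TTheory GRing.Theory Num.Theory.
Local Open Scope ring_scope.

Lemma evE (F : fieldType) (d m : nat) (i j : 'I_(d + m)) :
  ev F i 0 j = (j == i)%:R.
Proof. by rewrite /ev mxE eqxx. Qed.

Lemma brW (F : fieldType) (d m : nat) (T : 'I_m -> 'M[F]_d) x y (j : 'I_d) :
  br T x y 0 (lshift m j) = 0.
Proof. by rewrite /br row_mxEl mxE. Qed.

Lemma brZ (F : fieldType) (d m : nat) (T : 'I_m -> 'M[F]_d) x y (k : 'I_m) :
  br T x y 0 (rshift d k) = (lsubmx x *m T k *m (lsubmx y)^T) 0 0.
Proof. by rewrite /br row_mxEr mxE. Qed.

Lemma br_lsub (F : fieldType) (d m : nat) (T : 'I_m -> 'M[F]_d) x y :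
  lsubmx (br T x y) = 0.
Proof. by rewrite /br row_mxKl. Qed.

Lemma br0l (F : fieldType) (d m : nat) (T : 'I_m -> 'M[F]_d) x y :
  lsubmx x = 0 -> br T x y = 0.
Proof.
move=> h; rewrite /br h -row_mx0; congr row_mx; apply/rowP => k.
by rewrite mxE mul0mx mul0mx !mxE.
Qed.

Lemma br0r (F : fieldType) (d m : nat) (T : 'I_m -> 'M[F]_d) x y :
  lsubmx y = 0 -> br T x y = 0.
Proof.
move=> h; rewrite /br h -row_mx0; congr row_mx; apply/rowP => k.
by rewrite mxE trmx0 mulmx0 !mxE.
Qed.

Lemma lsub_evl (F : fieldType) (d m : nat) (l : 'I_d) :
  lsubmx (ev F (lshift m l)) = delta_mx 0 l.
Proof. by apply/rowP => j; rewrite !mxE eq_lshift. Qed.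

Lemma lsub_evr (F : fieldType) (d m : nat) (l : 'I_m) :
  lsubmx (ev F (rshift d l)) = 0.
Proof. by apply/rowP => j; rewrite !mxE eq_lrshift andbF. Qed.

Lemma mul_trdelta (F : fieldType) (d : nat) (M : 'M[F]_(1, d)) (l : 'I_d) :
  (M *m (delta_mx (0 : 'I_1) l)^T) 0 0 = M 0 l.
Proof.
rewrite trmx_delta mxE (bigD1 l) //= big1 ?addr0.
  by rewrite mxE !eqxx mulr1.
by move=> j /negbTE hj; rewrite mxE hj mulr0.
Qed.

Lemma wedgeE (F : fieldType) (d m : nat) (u v : 'rV[F]_(d + m)) a b :
  wedge u v a b = u 0 a * v 0 b - v 0 a * u 0 b.
Proof. by rewrite /wedge !mxE !big_ord1 !mxE. Qed.

Lemma adL2_central (F : fieldType) (d m : nat) (T : 'I_m -> 'M[F]_d) x A :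
  lsubmx x = 0 -> adL2 T x A = 0.
Proof.
move=> h; rewrite /adL2 big1 // => i _; rewrite big1 // => j _.
by rewrite !br0l // /wedge !trmx0 !mul0mx !mulmx0 !subrr addr0 scaler0.
Qed.
Lemma adL2_entry (F : fieldType) (d m : nat) (T : 'I_m -> 'M[F]_d) x
  (A : 'M[F]_(d + m)) (p : 'I_d) (k : 'I_m) :
  A^T = - A -> (forall a, A a a = 0) ->
  adL2 T x A (lshift m p) (rshift d k) =
  \sum_(l < d) A (lshift m p) (lshift m l) * (lsubmx x *m T k) 0 l.
Proof.
move=> As Ad.
set a := lshift m p; set b := rshift d k.
pose c j := br T x (ev F j) 0 b.
have Hs : forall i j, (wedge (br T x (ev F i)) (ev F j) + wedge (ev F i) (br T x (ev F j))) a b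
   = (a == i)%:R * c j - (a == j)%:R * c i.
  move=> i j; rewrite mxE !wedgeE !evE !brW.
  by rewrite !mul0r subr0 sub0r addrC (mulrC _ (c i)).
rewrite /adL2 summxE.
under eq_bigr => i _ do (rewrite summxE; under eq_bigr => j _ do rewrite mxE Hs mulrBr).
under eq_bigr => i _ do rewrite sumrB.
rewrite sumrB.
have E1 : \sum_(i < d + m) \sum_(j < d + m | (i < j)%N) A i j * ((a == i)%:R * c j)
   = \sum_(j < d + m | (a < j)%N) A a j * c j.
  rewrite (bigD1 a) //= [X in _ + X]big1 ?addr0.
    by apply eq_bigr => j _; rewrite eqxx mul1r.
  move=> i /negbTE hi; apply big1 => j _.
  by rewrite eq_sym hi mul0r mulr0.
have E2 : \sum_(i < d + m) \sum_(j < d + m | (i < j)%N) A i j * ((a == j)%:R * c i)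
   = \sum_(i < d + m | (i < a)%N) A i a * c i.
  rewrite [RHS]big_mkcond; apply eq_bigr => i _.
  rewrite big_mkcond (bigD1 a) //= [X in _ + X]big1 ?addr0.
    by case: ifP => _; rewrite ?eqxx ?mul1r.
  move=> j /negbTE hj; case: ifP => _ //.
  by rewrite eq_sym hj mul0r mulr0.
rewrite E1 E2.
have E3 : \sum_(i < d + m | (i < a)%N) A i a * c i
   = - \sum_(i < d + m | (i < a)%N) A a i * c i.
  rewrite -sumrN; apply eq_bigr => i _.
  have -> : A i a = - A a i.
    by move: (congr1 (fun M : 'M_(d + m) => M a i) As); rewrite !mxE.
  by rewrite mulNr.
rewrite E3 opprK.
have E4 : \sum_(j < d + m | (a < j)%N) A a j * c j + \sum_(j < d + m | (j < a)%N) A a j * c j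
   = \sum_(j < d + m) A a j * c j.
  rewrite !(big_mkcond (fun j => (_ < _)%N)) -big_split; apply eq_bigr => j _ /=.
  case: (ltngtP a j) => h; rewrite ?addr0 ?add0r //.
  have -> : j = a by apply/val_inj.
  by rewrite Ad mul0r.
rewrite E4 big_split_ord /= [X in _ + X]big1 ?addr0.
  apply eq_bigr => l _.
  by rewrite /c /b brZ lsub_evl mul_trdelta.
move=> l _; rewrite /c /b br0r ?lsub_evr //.
by rewrite mxE mulr0.
Qed.
Lemma trE (F : fieldType) (a b : nat) (A : 'M[F]_(a, b)) i j : A^T i j = A j i.
Proof. by rewrite mxE. Qed.

Lemma tst_family (F : fieldType) (d m : nat) (T : 'I_m -> 'M[F]_d)
  (S : 'I_d -> 'M[F]_d) :
  (forall i, (T i)^T = - T i) ->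
  (forall r, (S r)^T = - S r) ->
  (forall k r s p, (S r *m T k) p s = (S s *m T k) p r) ->
  forall t i k, T i *m S t *m T k + T k *m S t *m T i = 0.
Proof.
move=> Ts Ss C t i k.
have K1 : forall k u v q, (T k *m S u) v q = (S u *m T k) q v.
  move=> k' u v q.
  by rewrite -(trE (T k' *m S u)) trmx_mul Ts Ss mulNmx mulmxN opprK.
have Msym : forall u v, (T k *m S t *m T i) v u = (T k *m S t *m T i) u v.
  move=> u v.
  rewrite -!mulmxA !mxE.
  transitivity ((T k *m S u *m T i) v t).
    rewrite -mulmxA mxE; apply eq_bigr => p _; by rewrite C.
  transitivity ((T k *m S v *m T i) u t).
    rewrite !mxE; apply eq_bigr => q _; by rewrite !K1 C.
  rewrite -mulmxA mxE; apply eq_bigr => p _; by rewrite C.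
have : (T k *m S t *m T i)^T = T k *m S t *m T i.
  by apply/matrixP => u v; rewrite trE Msym.
rewrite !trmx_mul Ts Ss Ts !mulNmx !mulmxN opprK mulmxA => h.
rewrite -h.
by rewrite subrr.
Qed.
Unset Implicit Arguments.
Set Strict Implicit.
Theorem mainTheorem5 (F : fieldType) (d m : nat) (T : 'I_m -> 'M[F]_d)
  (char0 : [pchar F] =i pred0)
  (* bracket is alternating: each T_i is skew *)
  (Tskew : forall i, (T i)^T = - T i)
  (* 2-step nilpotent: not abelian *)
  (nonab : exists x y : 'rV[F]_(d + m), br T x y != 0)
  (* z is the center of n *)
  (center_z : forall x : 'rV[F]_(d + m),
      (forall y, br T x y = 0) <-> lsubmx x = 0)
  (tst : is_TST_type T)
  (inv : invariants_eq_L2z T)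
  (delta : 'rV[F]_(d + m) -> 'M[F]_(d + m))
  (hdelta : is_cobracket T delta) :
  (forall x, lsubmx x = 0 -> inL2z (delta x)) /\
  (forall x, rsubmx x = 0 -> inWZ_L2z (delta x)).
Proof.
case: hdelta => hl hsk _ hco.
have d0 : delta 0 = 0.
  have h := hl 1 0 0; rewrite !scale1r !addr0 in h.
  by apply: (addrI (delta 0)); rewrite addr0 -h.
have dD : forall x y, delta (x + y) = delta x + delta y.
  by move=> x y; have := hl 1 x y; rewrite !scale1r.
have dZ : forall a x, delta (a *: x) = a *: delta x.
  by move=> a x; rewrite -[a *: x]addr0 hl d0 addr0.
have dsum : forall n (f : 'I_n -> 'rV[F]_(d + m)),
    delta (\sum_(i < n) f i) = \sum_(i < n) delta (f i).
  by move=> n f; apply: (big_morph delta dD d0).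
have h2 : (2%:R : F) != 0 by move/pcharf0P: char0 => ->.
have skdiag : forall x a, delta x a a = 0.
  move=> x a; have := congr1 (fun M : 'M_(d + m) => M a a) (hsk x).
  rewrite /= trE mxE => /eqP; rewrite -subr_eq0 opprK -mulr2n -mulr_natr mulf_eq0.
  by rewrite (negbTE h2) orbF => /eqP.
have P1 : forall x, lsubmx x = 0 -> inL2z (delta x).
  move=> x hx; apply/(inv _ (hsk x)) => y.
  have := hco y x; rewrite br0r // d0 (@adL2_central _ _ _ T x (delta y) hx) subr0.
  by move=> <-.
split => //.
have isZl : forall p : 'I_d, isZ (lshift m p) = false.
  by move=> p; rewrite /isZ /= leqNgt ltn_ord.
pose S r := \matrix_(p < d, q < d) delta (ev F (lshift m r)) (lshift m p) (lshift m q).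
have Ss : forall r, (S r)^T = - S r.
  move=> r; apply/matrixP => p q; rewrite trE !mxE.
  have := congr1 (fun M : 'M_(d + m) => M (lshift m q) (lshift m p)) (hsk (ev F (lshift m r))).
  by rewrite /= trE mxE => ->; rewrite opprK.
have Tent : forall k a b, T k a b = - T k b a.
  move=> k a b; have := congr1 (fun M : 'M_d => M b a) (Tskew k).
  by rewrite /= trE mxE => ->.
have C : forall k r s p, (S r *m T k) p s = (S s *m T k) p r.
  move=> k r s p.
  have := hco (ev F (lshift m s)) (ev F (lshift m r)).
  move/(congr1 (fun M : 'M_(d + m) => M (lshift m p) (rshift d k))).
  rewrite /= (P1 _ (br_lsub _ _ _)); last by rewrite isZl.
  rewrite mxE [X in _ + X]mxE !adL2_entry ?hsk ?skdiag // !lsub_evl -!rowE.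
  move/eqP; rewrite eq_sym subr_eq0 => /eqP E.
  rewrite !mxE.
  transitivity (- \sum_(l < d) delta (ev F (lshift m r)) (lshift m p) (lshift m l) * row s (T k) 0 l).
    rewrite -sumrN; apply eq_bigr => l _; by rewrite !mxE (Tent k l s) mulrN.
  rewrite E -sumrN; apply eq_bigr => l _; by rewrite !mxE (Tent k l r) mulrN.
have S0 : forall t, S t = 0.
  by move=> t; apply: tst => i k; apply: tst_family.
move=> x hx i j hi hj.
have hi' : (i < d)%N by rewrite ltnNge.
have hj' : (j < d)%N by rewrite ltnNge.
have -> : i = lshift m (Ordinal hi') by apply/val_inj.
have -> : j = lshift m (Ordinal hj') by apply/val_inj.
rewrite [x]row_sum_delta big_split_ord /= [X in _ + X]big1 ?addr0.
  rewrite dsum summxE big1 // => r _.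
  rewrite dZ mxE.
  have := congr1 (fun M : 'M_d => M (Ordinal hi') (Ordinal hj')) (S0 r).
  by rewrite /= !mxE /ev => ->; rewrite mulr0.
move=> k _.
have := congr1 (fun M : 'rV_m => M 0 k) hx.
by rewrite /= !mxE => ->; rewrite scale0r.
Qed.
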